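(* Fix non-negative integers $r$ and $m>r$. Let $b_j=(1^j,2^j,\dots,m^j)^T\in\mathbb{R}^m$ for $j=0,\dots,r$, and let $\tilde b_0,\dots,\tilde b_r$ be obtained by Gram–Schmidt orthogonalization (without normalization) of the ordered set $b_0,\dots,b_r$, i.e. $\tilde b_j=b_j-\Pi_{j-1}b_j$ where $\Pi_{j-1}$ is the orthogonal projection onto $\mathrm{Span}(b_0,\dots,b_{j-1})$ (and $\tilde b_0=b_0$). Then there is a constant $c_r>0$ depending only on $r$ such that for every $j\in\{0,\dots,r\}$, $$\|\tilde b_j\|^2\ge c_r\,m^{2j+1}.$$ *)

(* Defs.v *)
From HB Require Import structures.
From mathcomp Require Import all_boot all_order all_algebra.
Set Implicit Arguments. Unset Strict Implicit. Unset Printing Implicit Defensive.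
Import Order.TTheory GRing.Theory Num.Theory.
Local Open Scope ring_scope.

Definition dotv (R : realFieldType) (m : nat) (u v : 'rV[R]_m) : R :=
  \sum_(i < m) u 0 i * v 0 i.

Definition bvec (R : realFieldType) (m j : nat) : 'rV[R]_m :=
  \row_(i < m) (i.+1)%:R ^+ j.

(* the list [:: tb_0; ...; tb_(n-1)] of the first n Gram–Schmidt vectors
   (no normalization): tb_j = b_j - sum_(i<j) (<b_j,tb_i>/<tb_i,tb_i>) tb_i,
   i.e. b_j minus its orthogonal projection onto Span(b_0,...,b_(j-1)). *)
Fixpoint gs_list (R : realFieldType) (m n : nat) : seq 'rV[R]_m :=
  match n with
  | 0 => [::]
  | n'.+1 =>
      let L := gs_list R m n' in
      rcons L (bvec R m n' -
               \sum_(u <- L) (dotv (bvec R m n') u / dotv u u) *: u)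
  end.

Definition gs_vec (R : realFieldType) (m j : nat) : 'rV[R]_m :=
  nth 0 (gs_list R m j.+1) j.

(* Main.v *)
Require Import Defs.
From HB Require Import structures.
From mathcomp Require Import all_boot all_order all_algebra.
From mathcomp Require Import reals.
From mathcomp Require Import ring lra zify.
Import Order.TTheory GRing.Theory Num.Theory.
Local Open Scope ring_scope.

Fixpoint Lf (R : realFieldType) (h : R) (j : nat) (f : R -> R) (x : R) : R :=
  match j with 0 => f x | j'.+1 => Lf R h j' f (x + h) - Lf R h j' f x end.
Arguments Lf {R}.

Lemma Lf_ext {R : realFieldType} (h : R) j f g x :
  (forall y, f y = g y) -> Lf h j f x = Lf h j g x.
Proof. by move=> e; elim: j x => [|j IH] x /=; rewrite ?e // !IH. Qed.

Lemma Lf_shift {R : realFieldType} (h h' : R) j f x :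
  Lf h j f (x + h') = Lf h j (fun y => f (y + h')) x.
Proof.
elim: j x => [|j IH] x //=; by rewrite -!IH addrAC.
Qed.

Lemma Lf_sub {R : realFieldType} (h : R) j f g x :
  Lf h j (fun y => f y - g y) x = Lf h j f x - Lf h j g x.
Proof. elim: j x => [|j IH] x //=; rewrite !IH; ring. Qed.

Lemma Lf_lin {R : realFieldType} (h : R) j n (c : nat -> R) (g : nat -> R -> R) x :
  Lf h j (fun y => \sum_(s < n) c s * g s y) x = \sum_(s < n) c s * Lf h j (g s) x.
Proof.
elim: j x => [|j IH] x //=; rewrite !IH -sumrB; apply: eq_bigr => s _; ring.
Qed.

Lemma binom_diff {R : realFieldType} (h y : R) t :
  (y + h) ^+ t - y ^+ t = \sum_(s < t) ('C(t, s)%:R * h ^+ (t - s)) * y ^+ s.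
Proof.
rewrite (addrC y h) exprDn big_ord_recr /= subnn expr0 mul1r binn mulr1n addrK.
apply: eq_bigr => s _; rewrite -mulr_natl; ring.
Qed.

Lemma Lf_mono {R : realFieldType} (h : R) j : forall t, (t <= j)%N -> forall x,
  Lf h j (fun y => y ^+ t) x = if t == j then (j`!)%:R * h ^+ j else 0.
Proof.
elim: j => [|j IH] t tj x /=.
  by move: tj; rewrite leqn0 => /eqP ->; rewrite /= !expr0 mulr1.
rewrite Lf_shift -Lf_sub.
rewrite (@Lf_ext R h j _ _ x (fun y => binom_diff h y t)) (Lf_lin h j t (fun s : nat => 'C(t, s)%:R * h ^+ (t - s)) (fun (s : nat) (y : R) => y ^+ s)).
have H : forall s : 'I_t, Lf h j (fun y => y ^+ s) x = if (s == j :> nat) then (j`!)%:R * h ^+ j else 0.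
  move=> s; apply: IH; have := ltn_ord s; lia.
under eq_bigr do rewrite H.
case: (ltnP t j.+1) => tj'.
  rewrite big1; last first.
    move=> s _; have : (s < j)%N by have := ltn_ord s; lia.
    by rewrite ltn_neqAle => /andP [/negbTE -> _]; rewrite mulr0.
  by have -> : (t == j.+1) = false by apply/negbTE; lia.
have et : t = j.+1 by lia.
subst t; rewrite eqxx big_ord_recr /= eqxx big1; last first.
  move=> s _; have : (s < j)%N by have := ltn_ord s; lia.
  by rewrite ltn_neqAle => /andP [/negbTE -> _]; rewrite mulr0.
rewrite add0r binSn factS subSn // subnn expr1 exprS natrM; ring.
Qed.

Lemma Lf_bound {R : realFieldType} (h : R) j f x :
  (Lf h j f x) ^+ 2 <= 4 ^+ j * \sum_(i < j.+1) (f (x + i%:R * h)) ^+ 2.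
Proof.
elim: j x => [|j IH] x /=.
  by rewrite expr0 mul1r big_ord1 mul0r addr0.
set S := \sum_(i < j.+2) _.
have HS : 0 <= \sum_(i < j.+1) (f (x + i%:R * h)) ^+ 2 by apply: sumr_ge0 => i _; apply: sqr_ge0.
have S1 : \sum_(i < j.+1) (f (x + h + i%:R * h)) ^+ 2 <= S.
  rewrite /S [X in _ <= X]big_ord_recl.
  have -> : \sum_(i < j.+1) (f (x + h + i%:R * h)) ^+ 2 = \sum_(i < j.+1) (f (x + (bump 0 i)%:R * h)) ^+ 2.
    apply: eq_bigr => i _; congr (f _ ^+ 2); rewrite /bump /= add1n -natr1; ring.
  rewrite -[X in X <= _]add0r; apply: lerD; [exact: sqr_ge0 | exact: lexx].
have S2 : \sum_(i < j.+1) (f (x + i%:R * h)) ^+ 2 <= S.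
  rewrite /S [X in _ <= X]big_ord_recr /=; rewrite -[X in X <= _]addr0; apply: lerD; [exact: lexx | exact: sqr_ge0].
have A := IH (x + h); have B := IH x.
set a := Lf h j f (x + h) in A *; set b := Lf h j f x in B *.
have P4 : 0 <= (4 : R) ^+ j by rewrite exprn_ge0.
have A' : a ^+ 2 <= 4 ^+ j * S := le_trans A (ler_wpM2l P4 S1).
have B' : b ^+ 2 <= 4 ^+ j * S := le_trans B (ler_wpM2l P4 S2).
have E : (a - b) ^+ 2 = 2 * a ^+ 2 + 2 * b ^+ 2 - (a + b) ^+ 2 by ring.
have := sqr_ge0 (a + b).
set T := 4 ^+ j * S in A' B' *.
rewrite E [(4:R) ^+ j.+1]exprS -mulrA -/T.
lra.
Qed.

Lemma sum_blocks {R : realFieldType} (F : nat -> R) h n :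
  \sum_(0 <= k < n * h) F k = \sum_(i < n) \sum_(x < h) F (i * h + x)%N.
Proof.
elim: n => [|n IH]; first by rewrite mul0n big_ord0 big_geq.
rewrite big_ord_recr /= -IH mulSnr (big_cat_nat _ (leq_addr h (n * h))) //=.
congr (_ + _).
rewrite -{1}(add0n (n * h)%N) big_addn addKn big_mkord.
by apply: eq_bigr => i _; rewrite addnC.
Qed.

Lemma sum_drop {R : realFieldType} (F : nat -> R) h n m :
  (forall k, 0 <= F k) -> (n * h <= m)%N ->
  \sum_(i < n) \sum_(x < h) F (i * h + x)%N <= \sum_(k < m) F k.
Proof.
move=> F0 le; rewrite -sum_blocks -(big_mkord xpredT) (@big_cat_nat _ _ _ (n * h)%N 0 m) //=.
by rewrite lerDl; apply: sumr_ge0 => i _.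
Qed.

Lemma poly_bound {R : realFieldType} (m j h : nat) (a : nat -> R) :
  (0 < h)%N -> (j.+1 * h <= m)%N ->
  (h%:R : R) ^+ (2 * j + 1) <=
  4 ^+ j * \sum_(k < m) ((k.+1%:R : R) ^+ j - \sum_(s < j) a s * (k.+1%:R) ^+ s) ^+ 2.
Proof.
move=> h0 hm.
set f := fun y : R => y ^+ j - \sum_(s < j) a s * y ^+ s.
have -> : \sum_(k < m) ((k.+1%:R : R) ^+ j - \sum_(s < j) a s * (k.+1%:R) ^+ s) ^+ 2
   = \sum_(k < m) (fun k : nat => f (k.+1%:R) ^+ 2) k by [].
have P4 : 0 <= (4 : R) ^+ j by rewrite exprn_ge0.
apply: (le_trans _ (ler_wpM2l P4 (sum_drop (fun k : nat => f (k.+1%:R) ^+ 2) h j.+1 m (fun k => sqr_ge0 _) hm))).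
rewrite exchange_big /= mulr_sumr.
have Lv : forall x0 : R, Lf (h%:R) j f x0 = (j`!)%:R * (h%:R) ^+ j.
  move=> x0; rewrite Lf_sub Lf_mono // eqxx.
  rewrite (Lf_lin (h%:R) j j a (fun (s : nat) (y : R) => y ^+ s)) big1 ?subr0 //.
  move=> s _; rewrite Lf_mono; last by have := ltn_ord s; lia.
  by rewrite ifF ?mulr0 //; apply/negbTE; have := ltn_ord s; lia.
have inner : forall x : 'I_h, (h%:R : R) ^+ (2 * j) <=
    4 ^+ j * \sum_(i < j.+1) f ((i * h + x).+1%:R) ^+ 2.
  move=> x; have B := Lf_bound (h%:R) j f (x.+1%:R).
  rewrite Lv in B.
  have -> : \sum_(i < j.+1) f ((i * h + x).+1%:R) ^+ 2 = \sum_(i < j.+1) f (x.+1%:R + i%:R * h%:R) ^+ 2.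
    apply: eq_bigr => i _; congr (f _ ^+ 2); rewrite -natrM -natrD; congr (_%:R); lia.
  apply: (le_trans _ B).
  rewrite exprMn mulnC exprM.
  rewrite -[X in X <= _]mul1r; apply: ler_wpM2r; first by rewrite exprn_ge0 // exprn_ge0.
  rewrite -natrX ler1n expn_gt0 fact_gt0.
  done.
apply: (le_trans _ (ler_sum _ (fun x _ => inner x))).
by rewrite sumr_const card_ord addn1 exprSr mulr_natr.
Qed.

Definition lowdeg {R : realFieldType} {m : nat} (n : nat) (v : 'rV[R]_m) :=
  exists a : nat -> R, v = \row_(k < m) \sum_(s < n) a s * (k.+1%:R) ^+ s.

Lemma lowdeg0 {R : realFieldType} m n : lowdeg n (0 : 'rV[R]_m).
Proof.
by exists (fun _ => 0); apply/rowP => k; rewrite !mxE big1 // => s _; rewrite mul0r.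
Qed.

Lemma lowdegD {R : realFieldType} m n (u v : 'rV[R]_m) :
  lowdeg n u -> lowdeg n v -> lowdeg n (u + v).
Proof.
move=> [a ->] [b ->]; exists (fun s => a s + b s); apply/rowP => k.
by rewrite !mxE -big_split; apply: eq_bigr => s _; rewrite mulrDl.
Qed.

Lemma lowdegZ {R : realFieldType} m n (c : R) (u : 'rV[R]_m) :
  lowdeg n u -> lowdeg n (c *: u).
Proof.
move=> [a ->]; exists (fun s => c * a s); apply/rowP => k.
by rewrite !mxE mulr_sumr; apply: eq_bigr => s _; rewrite mulrA.
Qed.

Lemma lowdegS {R : realFieldType} m n (u : 'rV[R]_m) :
  lowdeg n u -> lowdeg n.+1 u.
Proof.
move=> [a ->]; exists (fun s => if s == n then 0 else a s); apply/rowP => k.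
rewrite !mxE big_ord_recr /= eqxx mul0r addr0; apply: eq_bigr => s _.
by rewrite ifF //; apply/negbTE; rewrite neq_ltn ltn_ord.
Qed.

Lemma lowdeg_sum {R : realFieldType} m n (L : seq 'rV[R]_m) (c : 'rV[R]_m -> R) :
  (forall u, u \in L -> lowdeg n u) -> lowdeg n (\sum_(u <- L) c u *: u).
Proof.
elim: L => [|x L IH] H; first by rewrite big_nil; apply: lowdeg0.
rewrite big_cons; apply: lowdegD; first by apply: lowdegZ; apply: H; rewrite mem_head.
by apply: IH => u uL; apply: H; rewrite in_cons uL orbT.
Qed.

Lemma bvec_low {R : realFieldType} m n : lowdeg n.+1 (bvec R m n).
Proof.
exists (fun s => if s == n then 1 else 0); apply/rowP => k.
rewrite !mxE big_ord_recr /= eqxx mul1r big1 ?add0r // => s _.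
by rewrite ifF ?mul0r //; apply/negbTE; rewrite neq_ltn ltn_ord.
Qed.

Lemma gs_inv {R : realFieldType} m n :
  size (gs_list R m n) = n /\ forall u, u \in gs_list R m n -> lowdeg n u.
Proof.
elim: n => [|n [IHs IHl]] /=; first by split => // u.
split; first by rewrite size_rcons IHs.
move=> u; rewrite mem_rcons in_cons => /orP [/eqP -> | uL].
  apply: lowdegD; first exact: bvec_low.
  rewrite -scaleN1r; apply: lowdegZ; apply: lowdegS; exact: lowdeg_sum.
by apply: lowdegS; apply: IHl.
Qed.

Lemma gs_form {R : realFieldType} m j : exists a : nat -> R,
  gs_vec R m j = \row_(k < m) ((k.+1%:R) ^+ j - \sum_(s < j) a s * (k.+1%:R) ^+ s).
Proof.
have [Hs Hl] := gs_inv (R := R) m j.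
rewrite /gs_vec /= nth_rcons Hs ltnn eqxx.
have [a Ea] := lowdeg_sum _ _ _ (fun u => dotv (bvec R m j) u / dotv u u) Hl.
exists a; rewrite Ea; apply/rowP => k; by rewrite !mxE.
Qed.

Lemma mh_aux (m j h q : nat) : m = (h * j.+1 + q)%N -> (q < j.+1)%N -> (j <= h * j)%N -> (m <= (2 * j + 2) * h)%N.
Proof. move=> *. lia. Qed.

Theorem lemma9 (R : realType) (r : nat) :
  exists c : R, 0 < c /\
    forall m j : nat, (r < m)%N -> (j <= r)%N ->
      c * (m%:R) ^+ (2 * j + 1) <= dotv (gs_vec R m j) (gs_vec R m j).
Proof.
set K := (4 ^ r * (2 * r + 2) ^ (2 * r + 1))%N.
have K0 : (0 < K)%N by rewrite /K muln_gt0 !expn_gt0; lia.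
have K0R : (0 : R) < K%:R by rewrite ltr0n.
exists (K%:R^-1); split; first by rewrite invr_gt0.
move=> m j rm jr.
have [a Ea] := gs_form (R := R) m j.
set D := dotv _ _.
have ED : D = \sum_(k < m) ((k.+1%:R : R) ^+ j - \sum_(s < j) a s * (k.+1%:R) ^+ s) ^+ 2.
  by rewrite /D /dotv Ea; apply: eq_bigr => k _; rewrite !mxE expr2.
set h := (m %/ j.+1)%N.
have h0 : (0 < h)%N by rewrite divn_gt0 //; lia.
have hm : (j.+1 * h <= m)%N by rewrite mulnC leq_trunc_div.
have PB := poly_bound m j h a h0 hm; rewrite -ED in PB.
have mh : (m <= (2 * j + 2) * h)%N.
  have := leq_pmull j h0; have := ltn_pmod m (ltn0Sn j).
  have := divn_eq m j.+1; rewrite -/h; move: (m %% j.+1)%N => q; clearbody h; exact: mh_aux.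
have N1 : (m ^ (2 * j + 1) * 4 ^ j <= K * h ^ (2 * j + 1))%N.
  rewrite /K mulnAC -mulnA [X in (_ <= X)%N]mulnC; apply: leq_mul.
    apply: (leq_trans (_ : _ <= ((2 * j + 2) * h) ^ (2 * j + 1))%N).
      by rewrite leq_exp2r // addn1.
    rewrite expnMn mulnC leq_mul2l; apply/orP; right.
    apply: (leq_trans (_ : _ <= (2 * r + 2) ^ (2 * j + 1))%N).
      by rewrite leq_exp2r ?addn1 //; lia.
    by apply: leq_pexp2l; lia.
  by apply: leq_pexp2l; lia.
have N1R : (m%:R : R) ^+ (2 * j + 1) * 4 ^+ j <= K%:R * (h%:R) ^+ (2 * j + 1).
  have := N1; rewrite -(ler_nat R) !natrM !natrX.
  by [].
have P4 : (0 : R) < 4 ^+ j by rewrite exprn_gt0.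
have M1 : (m%:R : R) ^+ (2 * j + 1) <= K%:R * D.
  rewrite -(ler_pM2r P4); apply: (le_trans N1R).
  rewrite -mulrA [D * _]mulrC; apply: ler_wpM2l; [exact: ltW | exact: PB].
rewrite -(ler_pM2l K0R) mulrA mulfV ?mul1r //; by rewrite gt_eqF.
Qed.
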